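(* Let $G$ be a finite group with identity $e$, $R[G]$ its real group algebra, and $S=\{x\in R[G]: \sum_g x_g=1,\ x_g\ge0 \ \forall g\}$. For $x\in S$ let $n_x,G_x,c_x,m_x$ be as defined in the context, and let $S(x)$ be the set of all limits of all convergent subsequences of $(x^m)_{m\in\mathbb N}$. Then for every $x\in S$: $$xc_x=c_xx,\qquad S(x)=\{c_xx^r:\ 0\le r<m_x\}.$$ In particular $|S(x)|=1$, i.e. $S(x)=\{c_x\}$, if and only if $x\in R[G_x]$.
   Context: Elements of $R[G]$ are written $x=\sum_{g\in G}x_gg$; $\mathrm{Supp}(x)=\{g\in G: x_g\neq0\}$; $\mathbb N=\{1,2,\dots\}$; $R[G]$ carries the Euclidean topology. For $x\in S$: $n_x=\min\{k\in\mathbb N: (x^k)_e\ne0\}$; $G_x$ is the subgroup of $G$ generated by $\mathrm{Supp}(x^{n_x})$; $c_x=\frac1{|G_x|}\sum_{g\in G_x}g$; $m_x=\min\{k\in\mathbb N:\ \mathrm{Supp}(x^k)\subset G_x\}$. $R[G_x]$ denotes the subspace of $R[G]$ spanned by $G_x$. *)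

(* Defs.v *)
From HB Require Import structures.
From mathcomp Require Import all_boot all_order all_algebra all_fingroup.
From mathcomp Require Import all_classical all_reals all_analysis.
Set Implicit Arguments. Unset Strict Implicit. Unset Printing Implicit Defensive.
Import Order.TTheory GRing.Theory Num.Theory.
Import numFieldNormedType.Exports.
Local Open Scope ring_scope.
Local Open Scope classical_set_scope.

Section GroupAlgebra.
Variables (R : realType) (gT : finGroupType).

(* The real group algebra R[G] of the finite group G = gT:
   x = sum_g x_g g is represented by the coefficient function g |-> x_g. *)
Definition galg := {ffun gT -> R}.

Definition gmul (x y : galg) : galg :=
  [ffun g => \sum_(h : gT) x h * y (h^-1 * g)%g].

Definition gone : galg := [ffun g => (g == 1%g)%:R].

Fixpoint gpow (x : galg) (n : nat) : galg :=
  match n with 0 => gone | n'.+1 => gmul x (gpow x n') end.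

Definition Supp (x : galg) : {set gT} := [set g | x g != 0].

Definition simplex : set galg :=
  [set x | \sum_(g : gT) x g = 1 /\ forall g, 0 <= x g].

Definition n_x (x : galg) : nat :=
  match pselect (exists k, [pred k | (0 < k)%N && (gpow x k 1%g != 0)] k) with
  | left h => ex_minn h
  | right _ => 0%N
  end.

Definition G_x (x : galg) : {group gT} := <<Supp (gpow x (n_x x))>>%G.

Definition c_x (x : galg) : galg :=
  [ffun g => if g \in G_x x then (#|G_x x|%:R)^-1 else 0].

Definition m_x (x : galg) : nat :=
  match pselect (exists k, [pred k | (0 < k)%N && (Supp (gpow x k) \subset G_x x)] k) with
  | left h => ex_minn h
  | right _ => 0%N
  end.

Definition in_RGx (x : galg) : Prop := Supp x \subset G_x x.

(* S(x): limits of convergent subsequences (x^{phi k})_k of (x^m)_{m in N},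
   with phi strictly increasing, phi 0 >= 1.  Convergence in the Euclidean
   topology of R[G] = R^|G| is coordinatewise convergence. *)
Definition Slim (x : galg) : set galg :=
  [set y : galg | exists phi : nat -> nat,
     (0 < phi 0%N)%N /\ (forall k, (phi k < phi k.+1)%N) /\
     forall g : gT, (fun k => gpow x (phi k) g) @ \oo --> y g].

End GroupAlgebra.

(* Main.v *)
Require Import Defs.
From HB Require Import structures.
From mathcomp Require Import all_boot all_order all_algebra all_fingroup.
From mathcomp Require Import all_classical all_reals all_analysis.
From mathcomp Require Import zify.
Import Order.TTheory GRing.Theory Num.Theory.
Import numFieldNormedType.Exports.
Local Open Scope ring_scope.
Set Implicit Arguments. Unset Strict Implicit. Unset Printing Implicit Defensive.


Section Alg.
Variables (R : realType) (gT : finGroupType).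
Implicit Types a b w z : galg R gT.

Lemma gmulE a b g : gmul a b g = \sum_h a h * b (h^-1 * g)%g.
Proof. by rewrite ffunE. Qed.

Lemma sum_shiftl (f : gT -> R) g : \sum_h f (h^-1 * g)%g = \sum_h f h.
Proof.
have inj : injective (fun h : gT => (h^-1 * g)%g).
  by move=> u v /= /mulIg /invg_inj.
by rewrite [RHS](reindex_inj inj).
Qed.

Lemma sum_lmul (f : gT -> R) h : \sum_g f (h * g)%g = \sum_g f g.
Proof. by rewrite [RHS](reindex_inj (mulgI h)). Qed.

Lemma gmulE' a b g : gmul a b g = \sum_h a (g * h^-1)%g * b h.
Proof.
rewrite gmulE.
have inj : injective (fun h : gT => (g * h^-1)%g).
  by move=> u v /= /mulgI /invg_inj.
rewrite (reindex_inj inj) /=; apply: eq_bigr => h _.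
by rewrite invMg invgK -mulgA mulVg mulg1.
Qed.

Lemma gmulA a b w : gmul (gmul a b) w = gmul a (gmul b w).
Proof.
apply/ffunP => g; rewrite !ffunE.
under eq_bigr => h _ do rewrite ffunE big_distrl.
rewrite exchange_big; apply: eq_bigr => k _.
rewrite ffunE big_distrr (reindex_inj (mulgI k)) /=.
apply: eq_bigr => h _; rewrite mulKg invMg -mulgA mulrA //.
Qed.

Lemma gmul1 a : gmul (gone R gT) a = a.
Proof.
apply/ffunP => g; rewrite ffunE (bigD1 1%g) //= big1 => [|h /negbTE hn].
  by rewrite ffunE eqxx invg1 mul1g mul1r addr0.
by rewrite ffunE hn mul0r.
Qed.

Lemma gmulr1 a : gmul a (gone R gT) = a.
Proof.
apply/ffunP => g; rewrite ffunE (bigD1 g) //= big1 => [|h hn].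
  by rewrite ffunE mulVg eqxx mulr1 addr0.
rewrite ffunE; case: eqP => [/eqP e|_]; last by rewrite mulr0.
by move: e; rewrite -eq_invg_mul invgK (negbTE hn).
Qed.

Lemma gpow_add a i j : gpow a (i + j) = gmul (gpow a i) (gpow a j).
Proof.
elim: i => [|i IH]; first by rewrite add0n gmul1.
by rewrite addSn /= IH gmulA.
Qed.

Lemma gpow1 a : gpow a 1 = a.
Proof. by rewrite /= gmulr1. Qed.

Lemma gpow_mul a i j : gpow a (i * j) = gpow (gpow a i) j.
Proof.
elim: j => [|j IH]; first by rewrite muln0.
by rewrite mulnS gpow_add IH.
Qed.

Definition prob w := \sum_g w g = 1 /\ forall g, 0 <= w g.

Lemma prob_gone : prob (gone R gT).
Proof.
split=> [|g]; last by rewrite ffunE ler0n.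
rewrite (bigD1 1%g) //= big1 => [|h /negbTE hn]; first by rewrite ffunE eqxx addr0.
by rewrite ffunE hn.
Qed.

Lemma sum_gmul a b : \sum_g gmul a b g = (\sum_g a g) * \sum_g b g.
Proof.
under eq_bigr => g _ do rewrite gmulE.
rewrite exchange_big /= mulr_suml; apply: eq_bigr => h _ /=.
by rewrite -mulr_sumr sum_lmul.
Qed.

Lemma prob_gmul a b : prob a -> prob b -> prob (gmul a b).
Proof.
move=> [sa pa] [sb pb]; split; first by rewrite sum_gmul sa sb mulr1.
move=> g; rewrite gmulE; apply: sumr_ge0 => h _; exact: mulr_ge0.
Qed.

Lemma prob_gpow a k : prob a -> prob (gpow a k).
Proof. by move=> pa; elim: k => [|k IH] /=; [exact: prob_gone|exact: prob_gmul]. Qed.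

Lemma prob_le1 w g : prob w -> w g <= 1.
Proof.
move=> [sw pw]; rewrite -sw (bigD1 g) //= lerDl; exact: sumr_ge0.
Qed.

Lemma prob_supp w : prob w -> exists g, g \in Supp w.
Proof.
move=> [sw _]; case: (pickP (fun g => w g != 0)) => [g hg|hn].
  by exists g; rewrite inE.
move: sw; rewrite big1 => [|g _]; last by apply/eqP; move: (hn g) => /negbT; rewrite negbK.
by move=> /eqP; rewrite eq_sym oner_eq0.
Qed.

Lemma Supp_gmul a b : (forall g, 0 <= a g) -> (forall g, 0 <= b g) ->
  Supp (gmul a b) = (Supp a * Supp b)%g.
Proof.
move=> pa pb; apply/setP => g; rewrite inE gmulE; apply/idP/idP.
  move=> H; case: (pickP (fun h => a h * b (h^-1 * g)%g != 0)) => [h hh|hn].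
    move: hh; rewrite mulf_eq0 negb_or => /andP[ha hb].
    apply/mulsgP; exists h (h^-1 * g)%g; rewrite ?inE //.
    by rewrite mulKVg.
  move: H; rewrite big1 ?eqxx // => h _.
  by apply/eqP; move: (hn h) => /negbT; rewrite negbK.
case/mulsgP => h k; rewrite !inE => ha kb ->.
have t0 : 0 < a h * b k by apply: mulr_gt0; rewrite lt_def ?ha ?kb ?pa ?pb.
rewrite (bigD1 h) //= mulKg; apply: lt0r_neq0.
apply: (lt_le_trans t0); rewrite lerDl; apply: sumr_ge0 => i _; exact: mulr_ge0.
Qed.

End Alg.


Section Main.
Variables (R : realType) (gT : finGroupType) (x : galg R gT).
Hypothesis Hx : prob x.

Let Spow k := Supp (gpow x k).

Lemma Spow_add i j : Spow (i + j) = (Spow i * Spow j)%g.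
Proof.
by rewrite /Spow gpow_add Supp_gmul // => g; case: (prob_gpow i Hx) => _; case: (prob_gpow j Hx) => _.
Qed.

Lemma Spow0 : Spow 0 = [set 1%g].
Proof.
apply/setP => g; rewrite !inE /= ffunE.
by case: (g == 1%g); rewrite ?oner_eq0 ?eqxx.
Qed.

Lemma Spow1 : Spow 1 = Supp x.
Proof. by rewrite /Spow gpow1. Qed.

Lemma n_spec : (0 < n_x x)%N /\ 1%g \in Spow (n_x x).
Proof.
rewrite /n_x; case: pselect => [h|nh].
  by case: (ex_minnP h) => k /andP[k0 kk] _; split => //; rewrite /Spow inE.
exfalso; apply: nh.
have [a aA] := prob_supp Hx.
have pw : forall j, (a ^+ j)%g \in Spow j.
  elim => [|j IH]; first by rewrite Spow0 expg0 inE.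
  by rewrite -add1n Spow_add Spow1 expgS mem_mulg.
exists #[a]%g; rewrite /= order_gt0 /=; have := pw #[a]%g.
by rewrite expg_order /Spow inE.
Qed.

Let n := n_x x.

Lemma m_spec : [/\ (0 < m_x x)%N, Spow (m_x x) \subset G_x x &
  forall k, (0 < k)%N -> Spow k \subset G_x x -> (m_x x <= k)%N].
Proof.
rewrite /m_x; case: pselect => [h|nh].
  case: (ex_minnP h) => k /andP[k0 kk] kmin; split => // j j0 jj.
  by apply: kmin; rewrite /= j0 jj.
exfalso; apply: nh; exists (n_x x); rewrite /= (n_spec).1 /=; exact: subset_gen.
Qed.

Lemma B_sub k : Spow (k * n) \subset G_x x.
Proof.
elim: k => [|k IH]; first by rewrite mul0n Spow0 finset.sub1set group1.
rewrite mulSn Spow_add -(mulGid (G_x x)); apply: mulgSS => //; exact: subset_gen.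
Qed.

Lemma B_one k : 1%g \in Spow (k * n).
Proof.
elim: k => [|k IH]; first by rewrite mul0n Spow0 inE.
by rewrite mulSn Spow_add -(mulg1 1%g) mem_mulg // (n_spec).2.
Qed.

Lemma B_mono k : Spow (k * n) \subset Spow (k.+1 * n).
Proof. rewrite mulSn Spow_add; apply: mulg_subr; exact: (n_spec).2. Qed.

Lemma B_monoT i j : (i <= j)%N -> Spow (i * n) \subset Spow (j * n).
Proof.
move=> ij; rewrite -(subnKC ij); elim: (j - i)%N => [|d IH]; first by rewrite addn0.
rewrite addnS; exact: fintype.subset_trans IH (B_mono _).
Qed.

Lemma B_stab : exists k, (0 < k)%N /\ Spow (k.+1 * n) = Spow (k * n).
Proof.
case: (boolP [exists k : 'I_#|gT|.+1, (0 < k)%N && (Spow (k.+1 * n) == Spow (k * n))]).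
  by case/existsP => k /andP[k0 /eqP e]; exists k.
move/existsPn => hn; exfalso.
have card_ge : forall k, (k <= #|gT|)%N -> (k.+1 <= #|Spow (k.+1 * n)|)%N.
  elim => [|k IH] hk.
    by rewrite card_gt0; apply/set0Pn; exists 1%g; exact: B_one.
  have hk' : (k.+1 < #|gT|.+1)%N by [].
  have := hn (Ordinal hk'); rewrite /= => ne.
  have sub := B_mono k.+1.
  have lt : (#|Spow (k.+1 * n)| < #|Spow (k.+2 * n)|)%N.
    rewrite ltnNge; apply: contra ne => c; by rewrite eq_sym eqEcard sub c.
  exact: leq_ltn_trans (IH (ltnW hk)) lt.
by have := card_ge #|gT| (leqnn _); rewrite ltnNge max_card.
Qed.

Lemma B_group : exists k, [/\ (0 < k)%N, Spow (k * n) = G_x x & Spow (k.+1 * n) = G_x x].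
Proof.
have [k [k0 e]] := B_stab.
have const : forall j, Spow ((k + j) * n) = Spow (k * n).
  elim => [|j IH]; first by rewrite addn0.
  by rewrite addnS mulSn Spow_add IH -Spow_add -mulSn e.
have gs : group_set (Spow (k * n)).
  by rewrite /group_set B_one /= -Spow_add -mulnDl const subxx.
suff gE : Spow (k * n) = G_x x by exists k; rewrite e gE.
apply/eqP; rewrite finset.eqEsubset B_sub /=.
have -> : Spow (k * n) = (Group gs : {set gT}) by [].
rewrite (gen_subG _ (Group gs)) /=.
by have := B_monoT k0; rewrite mul1n.
Qed.


Section WithL.
Variable L : nat.
Hypotheses (L0 : (0 < L)%N) (HL1 : Spow L = G_x x) (HL2 : Spow (L + n) = G_x x).

Lemma A_diff a b : a \in Supp x -> b \in Supp x -> (a^-1 * b)%g \in G_x x.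
Proof.
move=> aA bA.
have [t tS] := prob_supp (prob_gpow n.-1 Hx).
have e : Spow (L + n) = (Spow n.-1 * (Spow L * Spow 1))%g.
  by rewrite -!Spow_add; congr Spow; have := (n_spec).1; rewrite -/n; lia.
have ta : (t * (1 * a))%g \in G_x x.
  rewrite -HL2 e; apply: mem_mulg => //; apply: mem_mulg; last by rewrite Spow1.
  by rewrite HL1 group1.
have tb : (t * (1 * b))%g \in G_x x.
  rewrite -HL2 e; apply: mem_mulg => //; apply: mem_mulg; last by rewrite Spow1.
  by rewrite HL1 group1.
rewrite !mul1g in ta tb.
by have := groupM (groupVr ta) tb; rewrite invMg -mulgA mulKg.
Qed.

Lemma A_norm h : h \in Supp x -> h \in 'N(G_x x)%g.
Proof.
move=> hA; rewrite inE; apply/fintype.subsetP => v /imsetP [u uH ->].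
have : (u * h)%g \in Spow (1 + L) by rewrite addnC Spow_add HL1 Spow1 mem_mulg.
rewrite Spow_add Spow1 HL1 => /mulsgP [a v' aA vH e].
by rewrite /= conjgE e mulgA groupMr // A_diff.
Qed.


Lemma cE g : c_x x g = if g \in G_x x then (#|G_x x|%:R)^-1 else 0.
Proof. by rewrite ffunE. Qed.

Lemma cH_pos : 0 < (#|G_x x|%:R : R)^-1.
Proof. by rewrite invr_gt0 ltr0n cardG_gt0. Qed.

Lemma cH_le1 : (#|G_x x|%:R : R)^-1 <= 1.
Proof. by rewrite invf_le1 ?ltr0n ?cardG_gt0 // ler1n cardG_gt0. Qed.

Lemma c_ge0 g : 0 <= c_x x g.
Proof. by rewrite cE; case: ifP => // _; exact: ltW cH_pos. Qed.

Lemma c_sum : \sum_g c_x x g = 1.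
Proof.
under eq_bigr => g _ do rewrite cE.
rewrite -big_mkcond sumr_const -(mulr_natr ((#|G_x x|%:R : R)^-1)) mulVf //.
by rewrite pnatr_eq0 -lt0n cardG_gt0.
Qed.

Lemma c_comm : gmul x (c_x x) = gmul (c_x x) x.
Proof.
apply/ffunP => g; rewrite gmulE gmulE'; apply: eq_bigr => h _.
case: (boolP (x h == 0)) => [/eqP -> | xh]; first by rewrite mul0r mulr0.
have hN : (h^-1)%g \in 'N(G_x x)%g by apply: groupVr; apply: A_norm; rewrite inE.
rewrite !cE -(memJ_norm (h^-1 * g)%g hN) conjgE invgK mulgA mulKVg.
by rewrite mulrC.
Qed.

Lemma c_left w : prob w -> Supp w \subset G_x x -> gmul (c_x x) w = c_x x.
Proof.
move=> [sw pw] sub; apply/ffunP => g; rewrite gmulE'.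
transitivity (\sum_h c_x x g * w h); last by rewrite -mulr_sumr sw mulr1.
apply: eq_bigr => h _; case: (boolP (w h == 0)) => [/eqP->|wh]; first by rewrite !mulr0.
have hH : h \in G_x x by apply: (fintype.subsetP sub); rewrite inE.
by rewrite !cE groupMr ?groupV.
Qed.

Lemma c_right_sum w g : prob w -> Supp w \subset G_x x ->
  \sum_h w h * c_x x (h^-1 * g)%g = c_x x g.
Proof.
move=> [sw pw] sub.
transitivity (\sum_h w h * c_x x g); last by rewrite -mulr_suml sw mul1r.
apply: eq_bigr => h _; case: (boolP (w h == 0)) => [/eqP->|wh]; first by rewrite !mul0r.
have hH : h \in G_x x by apply: (fintype.subsetP sub); rewrite inE.
by rewrite !cE groupMl ?groupV.
Qed.

Lemma cx_pow j : gmul (c_x x) (gpow x j) = gmul (c_x x) (gpow x (j %% m_x x)).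
Proof.
have [m0 mH _] := m_spec.
have cq : forall q, gmul (c_x x) (gpow x (m_x x * q)) = c_x x.
  elim => [|q IH]; first by rewrite muln0 gmulr1.
  rewrite mulnS gpow_add -gmulA c_left ?IH //; exact: prob_gpow.
by rewrite {1}(divn_eq j (m_x x)) gpow_add -gmulA [(_ * m_x x)%N]mulnC cq.
Qed.


Lemma SLk k : Spow (L * k) \subset G_x x.
Proof.
elim: k => [|k IH]; first by rewrite muln0 Spow0 finset.sub1set group1.
by rewrite mulnS Spow_add HL1 -{2}(mulGid (G_x x)) mulgS.
Qed.

Let z := gpow x L.
Let pz : prob z. Proof. exact: prob_gpow. Qed.

Let dl := \big[Order.min/1]_(h in G_x x) z h.

Lemma dl_pos : 0 < dl.
Proof.
rewrite ltNge; apply/negP => /bigmin_leP [|[h hH hz]]; first by rewrite ler10.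
have : h \in Spow L by rewrite HL1.
rewrite inE => hz0; have := pz.2 h.
by rewrite le_eqVlt eq_sym (negbTE hz0) /= ltNge hz.
Qed.

Lemma dl_le h : h \in G_x x -> dl <= z h.
Proof. by move=> hH; apply: bigmin_le_cond. Qed.

Let eps := dl * #|G_x x|%:R.
Let q := 1 - eps.

Lemma z_out h : h \notin G_x x -> z h = 0.
Proof. by rewrite -HL1 inE negbK => /eqP. Qed.

Lemma sum_ind : \sum_h (if h \in G_x x then dl else 0) = eps.
Proof. by rewrite -big_mkcond sumr_const /eps mulr_natr. Qed.

Lemma eps_pos : 0 < eps.
Proof. by rewrite /eps mulr_gt0 ?dl_pos // ltr0n cardG_gt0. Qed.

Lemma eps_le1 : eps <= 1.
Proof.
rewrite -sum_ind -pz.1; apply: ler_sum => h _.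
by case: ifP => hH; [exact: dl_le|exact: pz.2].
Qed.

Lemma q_ge0 : 0 <= q. Proof. by rewrite /q subr_ge0 eps_le1. Qed.
Lemma q_lt1 : q < 1. Proof. by rewrite /q ltrBlDr ltrDl eps_pos. Qed.

Lemma decay k g : `|gpow z k g - c_x x g| <= q ^+ k.
Proof.
elim: k g => [|k IH] g.
  rewrite expr0 /= ffunE cE.
  have h1 := cH_pos; have h2 := cH_le1.
  case: (g == 1%g); case: (g \in G_x x); rewrite /= ?subr0 ?sub0r ?normrN ?normr0 ?ler01 ?normr1 //.
    by rewrite ger0_norm; [rewrite lerBlDr lerDl ltW | rewrite subr_ge0].
  by rewrite ger0_norm // ltW.
set w := gpow z k.
have pw : prob w by exact: prob_gpow.
have sw : Supp w \subset G_x x by rewrite /w /z -gpow_mul; exact: SLk.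
set d := fun h => z h - (if h \in G_x x then dl else 0).
have d0 : forall h, 0 <= d h.
  move=> h; rewrite /d; case: ifP => hH; first by rewrite subr_ge0 dl_le.
  by rewrite subr0 pz.2.
have sd : \sum_h d h = q by rewrite /d sumrB sum_ind pz.1.
set f := fun h => w h - c_x x h.
have wout : forall h, h \notin G_x x -> w h = 0.
  move=> h hH; apply/eqP; apply: contraR hH => wh.
  by apply: (fintype.subsetP sw); rewrite inE.
have cout : forall h, h \notin G_x x -> c_x x h = 0 by move=> h hH; rewrite cE (negbTE hH).
have e1 : gpow z k.+1 g - c_x x g = \sum_h z h * f (h^-1 * g)%g.
  have szH : Supp z \subset G_x x by rewrite -HL1 /Spow /z subxx.
  rewrite /= gmulE -(c_right_sum g pz szH) -sumrB.
  by apply: eq_bigr => h _; rewrite /f mulrBr.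
have e2 : \sum_h (if h \in G_x x then dl else 0) * f (h^-1 * g)%g = 0.
  transitivity (\sum_h (if g \in G_x x then dl else 0) * f (h^-1 * g)%g).
    apply: eq_bigr => h _.
    case: (boolP ((h^-1 * g)%g \in G_x x)) => hg; last first.
      by rewrite /f wout // cout // subrr !mulr0.
    by rewrite -{2}(mulKVg h g) groupMr.
  rewrite -mulr_sumr (sum_shiftl f g) /f sumrB pw.1 c_sum subrr mulr0 //.
have e3 : gpow z k.+1 g - c_x x g = \sum_h d h * f (h^-1 * g)%g.
  rewrite e1; transitivity (\sum_h d h * f (h^-1 * g)%g +
    \sum_h (if h \in G_x x then dl else 0) * f (h^-1 * g)%g); last by rewrite e2 addr0.
  rewrite -big_split /=; apply: eq_bigr => h _.
  by rewrite -mulrDl /d subrK.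
rewrite e3 exprS -{1}sd mulr_suml; apply: (le_trans (ler_norm_sum _ _ _)).
apply: ler_sum => h _; rewrite normrM ger0_norm //; apply: ler_wpM2l; [exact: d0 | exact: IH].
Qed.

Lemma bound k j g :
  `|gpow x (L * k + j) g - gmul (c_x x) (gpow x j) g| <= q ^+ k.
Proof.
rewrite gpow_add gpow_mul !gmulE -sumrB.
apply: (le_trans (ler_norm_sum _ _ _)).
have pj := prob_gpow j Hx.
apply: (@le_trans _ _ (\sum_h q ^+ k * gpow x j (h^-1 * g)%g)).
  apply: ler_sum => h _; rewrite -mulrBl normrM (ger0_norm (pj.2 _)).
  by apply: ler_wpM2r; [exact: pj.2 | exact: decay].
by rewrite -mulr_sumr (sum_shiftl (gpow x j) g) pj.1 mulr1.
Qed.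

Lemma q_small e : 0 < e -> exists K, forall k, (K <= k)%N -> q ^+ k < e.
Proof.
move=> e0.
have qn : `|q| < 1 by rewrite ger0_norm ?q_ge0 // q_lt1.
have := cvg_expr qn; move/cvgrPdist_lt => /(_ e e0) [K _ HK].
exists K => k Hk; have := HK k Hk.
by rewrite /= sub0r normrN ger0_norm // exprn_ge0 // q_ge0.
Qed.


Lemma phi_ge (phi : nat -> nat) : (forall k, phi k < phi k.+1)%N -> forall k, (k <= phi k)%N.
Proof. move=> hs; elim => // k IH; exact: leq_ltn_trans IH (hs k). Qed.

Lemma Slim_eq : Slim x =
  [set y : galg R gT | exists r : nat, (r < m_x x)%N /\ y = gmul (c_x x) (gpow x r)]%classic.
Proof.
have [m0 mH mmin] := m_spec.
apply/seteqP; split => y /=.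
  move=> [phi [phi0 [phiS conv]]].
  have [j Hj] : exists j, forall K, exists k, (K <= k)%N /\ (phi k %% L)%N = j.
    apply: contrapT => Hn.
    have Hn' : forall j : 'I_L, exists K, forall k, (K <= k)%N -> (phi k %% L)%N <> j.
      move=> j; apply: contrapT => Hj; apply: Hn; exists j => K.
      apply: contrapT => HK; apply: Hj; exists K => k Kk ekj; by apply: HK; exists k.
    have [Kf HKf] := boolp.choice Hn'.
    have hl : (phi (\max_(j : 'I_L) Kf j) %% L < L)%N by rewrite ltn_pmod.
    by move: (HKf (Ordinal hl)) => /(_ _ (@leq_bigmax _ Kf (Ordinal hl))); apply.
  exists (j %% m_x x)%N; split; first by rewrite ltn_pmod.
  rewrite -cx_pow; apply/ffunP => g.
  set t := gmul (c_x x) (gpow x j) g.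
  suff : `|y g - t| <= 0 by rewrite normr_le0 subr_eq0 => /eqP.
  apply/ler_addgt0Pr => e e0; rewrite add0r.
  have e2 : 0 < e / 2 by rewrite divr_gt0.
  have := conv g; move/cvgrPdist_lt => /(_ _ e2) [K1 _ HK1].
  have [K2 HK2] := q_small e2.
  have [k [kK ek]] := Hj (K1 + K2 * L)%N.
  have h1 : `|y g - gpow x (phi k) g| < e / 2.
    by apply: HK1 => /=; apply: leq_trans kK; rewrite leq_addr.
  have pk : phi k = (L * (phi k %/ L) + j)%N by rewrite {1}(divn_eq (phi k) L) mulnC ek.
  have bg : (K2 <= phi k %/ L)%N.
    rewrite leq_divRL //; have := phi_ge phiS k; lia.
  have h2 : `|gpow x (phi k) g - t| < e / 2.
    by rewrite pk; apply: le_lt_trans (bound _ _ _) (HK2 _ bg).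
  apply: (le_trans (ler_distD (gpow x (phi k) g) _ _)).
  by rewrite [leRHS]splitr; apply: lerD; exact: ltW.
move=> [r [rm ->]].
exists (fun k => L * k.+1 + r)%N; split; first by rewrite muln1 ltn_addr.
split; first by move=> k; rewrite ltn_add2r ltn_pmul2l.
move=> g; apply/cvgrPdist_lt => e e0.
have [K2 HK2] := q_small e0.
exists K2 => // k /= Kk; rewrite distrC.
by apply: le_lt_trans (bound _ _ _) (HK2 _ _); apply: leqW.
Qed.

End WithL.

End Main.


Lemma cx_neq (R : realType) (gT : finGroupType) (x : galg R gT) :
  prob x -> ~ in_RGx x -> gmul (c_x x) x <> c_x x.
Proof.
move=> Hx; rewrite /in_RGx => /negP /subsetPn [a aA aH] e.
have : a \in Supp (gmul (c_x x) x).
  rewrite Supp_gmul; [|exact: c_ge0|exact: Hx.2].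
  rewrite -(mul1g a) mem_mulg // inE cE group1; exact: lt0r_neq0 (cH_pos _).
by rewrite e inE cE (negbTE aH) eqxx.
Qed.

Local Open Scope classical_set_scope.

Theorem theorem1 (R : realType) (gT : finGroupType) (x : galg R gT) :
  simplex x ->
  gmul x (c_x x) = gmul (c_x x) x /\
  Slim x = [set y : galg R gT | exists r : nat, (r < m_x x)%N /\ y = gmul (c_x x) (gpow x r)] /\
  ((exists y, Slim x = [set y]) <-> in_RGx x) /\
  (Slim x = [set c_x x] <-> in_RGx x).
Proof.
move=> [s p]; have Hx : prob x by [].
have [k [k0 e1 e2]] := B_group Hx.
have L0 : (0 < k * n_x x)%N by rewrite muln_gt0 k0 (n_spec Hx).1.
have HL2 : Supp (gpow x (k * n_x x + n_x x)) = G_x x by rewrite -mulSnr.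
have SE := Slim_eq Hx L0 e1.
have [m0 mH mmin] := m_spec Hx.
have m1 : m_x x = 1%N <-> in_RGx x.
  split => [e|iR]; first by move: mH; rewrite e /in_RGx gpow1.
  by apply/eqP; rewrite eqn_leq m0 andbT; apply: mmin => //; rewrite gpow1.
have Sc : in_RGx x -> Slim x = [set c_x x].
  move=> /m1 em; rewrite SE; apply/seteqP; split => y /=.
    by move=> [r [r1 ->]]; move: r1; rewrite em ltnS leqn0 => /eqP ->; rewrite /= gmulr1.
  by move=> ->; exists 0%N; split; [rewrite em|rewrite /= gmulr1].
have P3 : (exists y, Slim x = [set y]) <-> in_RGx x.
  split; last by move=> iR; exists (c_x x); exact: Sc.
  move=> [y0 e]; apply: contrapT => nR.
  have m2 : (1 < m_x x)%N.
    by rewrite ltn_neqAle eq_sym m0 andbT; apply/eqP => em; apply: nR; apply/m1.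
  have h0 : Slim x (c_x x) by rewrite SE; exists 0%N; split => //; rewrite /= gmulr1.
  have h1 : Slim x (gmul (c_x x) x) by rewrite SE; exists 1%N; rewrite gpow1.
  rewrite e in h0 h1; apply: (cx_neq Hx nR); by rewrite h1 h0.
have CC := c_comm Hx L0 e1 HL2. split; first exact: CC.
split; first exact: SE.
split; first exact: P3.
split; last exact: Sc.
by move=> e; apply/P3; exists (c_x x).
Qed.
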